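(* Let $(\mathcal A,\otimes,\mathbb 1)$ be a monoidal category and $\mathbb B=(\mathrm B,\mu^{\mathbb B},\eta^{\mathbb B})$ an opmonoidal monad on $\mathcal A$ with opmonoidal constraints $\mathrm B_2(X,Y)\colon\mathrm B(X\otimes Y)\to\mathrm B(X)\otimes\mathrm B(Y)$ and $\mathrm B_0\colon\mathrm B(\mathbb 1)\to\mathbb 1$. Let $\mathbb C$ be the comonad on $\mathcal A$ with $\mathrm C(X)=\mathrm B(\mathbb 1)\otimes X$, $\mathrm C(f)=\mathrm{id}_{\mathrm B(\mathbb 1)}\otimes f$, $\Delta^{\mathbb C}_X=\mathrm B_2(\mathbb 1,\mathbb 1)\otimes X$, $\varepsilon^{\mathbb C}_X=\mathrm B_0\otimes\mathrm{id}_X$, and $\theta_X=(\mu^{\mathbb B}_{\mathbb 1}\otimes\mathrm{id}_{\mathrm B(X)})\mathrm B_2(\mathrm B(\mathbb 1),X)\colon\mathrm{BC}(X)\to\mathrm{CB}(X)$ the associated mixed distributive law of $\mathbb B$ over $\mathbb C$. Let $\mathrm F\dashv\mathrm U$ be the Eilenberg--Moore adjunction of $\mathbb B$, $\mathbb T$ the induced comonad on $\mathcal A^{\mathbb B}$, $\mathbb C^\theta$ the comonad on $\mathcal A^{\mathbb B}$ with $\mathrm C^\theta(X,\alpha)=(\mathrm B(\mathbb 1)\otimes X,(\mu^{\mathbb B}_{\mathbb 1}\otimes\alpha)\mathrm B_2(\mathrm B(\mathbb 1),X))$ and comultiplication/counit those of $\mathbb C$, $\chi\colon\mathrm T\mathrm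 C^\theta\Rightarrow\mathrm C^\theta\mathrm T$ given by $\chi_{(X,\alpha)}=\theta_X$, $\mathrm V\colon(\mathcal A^{\mathbb B})_{\mathbb C^\theta}\rightleftarrows\mathcal A^{\mathbb B}\colon\mathrm G$ the Eilenberg--Moore adjunction of $\mathbb C^\theta$, $\mathbb T^\theta$ the comonad on $(\mathcal A^{\mathbb B})_{\mathbb C^\theta}$ with $\mathrm T^\theta((X,\alpha),\delta)=((\mathrm B(X),\mu^{\mathbb B}_X),\theta_X\mathrm B(\delta))$, $\mathrm T^\theta(f)=\mathrm T(f)$ and comultiplication/counit those of $\mathbb T$, and $\tilde\Omega\colon\mathrm T^\theta\mathrm G\Rightarrow\mathrm G\mathrm T$ given by $\tilde\Omega_{(X,\alpha)}=(\mu^{\mathbb B}_{\mathbb 1}\otimes\mathrm{id}_{\mathrm B(X)})\mathrm B_2(\mathrm B(\mathbb 1),X)$. If $\mathbb B$ is a right pre-Hopf monad, then $\tilde\Omega$ implements an extension $\mathbb T^\theta$ of $\mathbb T$ through $\mathrm V\dashv\mathrm G$, and for every category $\mathcal Z$ and functor $\mathrm N\colon\mathcal A^{\mathbb B}\to\mathcal Z$, the left $\chi$-coalgebra structures on $\mathrm N$ correspond bijectively to $\mathbb T^\theta$-opcoalgebra structures on $\mathrm{NV}$.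
   Context: Associativity and unit constraints of the monoidal category are suppressed. An opmonoidal monad is a monad whose endofunctor is opmonoidal (with $\mathrm B_2,\mathrm B_0$ satisfying the opmonoidal functor axioms) and whose multiplication and unit are opmonoidal natural transformations. The right fusion operator is $H^r_{X,Y}=(\mu^{\mathbb B}_X\otimes\mathrm{id}_{\mathrm B(Y)})\mathrm B_2(\mathrm B(X),Y)\colon\mathrm B(\mathrm B(X)\otimes Y)\to\mathrm B(X)\otimes\mathrm B(Y)$; $\mathbb B$ is a right pre-Hopf monad if $H^r_{\mathbb 1,X}$ is an isomorphism for all $X$. $\mathcal A^{\mathbb B}$ is the category of $\mathbb B$-algebras $(X,\alpha)$; $\mathrm F(X)=(\mathrm B(X),\mu^{\mathbb B}_X)$, $\mathrm U$ forgetful, counit $\varepsilon_{(X,\alpha)}=\alpha$; $\mathbb T=(\mathrm{FU},\mathrm F\eta^{\mathbb B}\mathrm U,\varepsilon)$. $(\mathcal A^{\mathbb B})_{\mathbb C^\theta}$ is the category of $\mathbb C^\theta$-coalgebras $(Y,\delta)$; $\mathrm V$ forgetful, $\mathrm G(Y)=(\mathrm C^\theta(Y),\Delta^{\mathbb C^\theta}_Y)$. ''$\tilde\Omega$ implements an extension $\mathbb T^\theta$ of $\mathbb T$'' means $\tilde\Omega$ is a natural isomorphism and $(\mathrm G,\tilde\Omega)$ is a lax morphism of comonads from $\mathbb T^\theta$ to $\mathbb T$: $\mathrm G\Delta^{\mathbb T}\circ\tilde\Omega=\tilde\Omega\mathrm T\circ\mathrm T^\theta\tilde\Omega\circ\Delta^{\mathbb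 T^\theta}\mathrm G$ and $\mathrm G\varepsilon^{\mathbb T}\circ\tilde\Omega=\varepsilon^{\mathbb T^\theta}\mathrm G$. A left $\chi$-coalgebra structure on $\mathrm N$ is $\lambda\colon\mathrm N\mathrm C^\theta\Rightarrow\mathrm{NT}$ with $\mathrm N\Delta^{\mathbb T}\circ\lambda=\lambda\mathrm T\circ\mathrm N\chi\circ\lambda\mathrm C^\theta\circ\mathrm N\Delta^{\mathbb C^\theta}$ and $\mathrm N\varepsilon^{\mathbb T}\circ\lambda=\mathrm N\varepsilon^{\mathbb C^\theta}$. A $\mathbb T^\theta$-opcoalgebra structure on $\mathrm P$ is $\nabla\colon\mathrm P\Rightarrow\mathrm P\mathrm T^\theta$ with $\mathrm P\Delta^{\mathbb T^\theta}\circ\nabla=\nabla\mathrm T^\theta\circ\nabla$, $\mathrm P\varepsilon^{\mathbb T^\theta}\circ\nabla=\mathrm{id}_{\mathrm P}$. Juxtaposition is composition/whiskering, $\circ$ vertical composition. *)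

(* Defs.v *)
From Stdlib Require Import ProofIrrelevance.

Set Implicit Arguments.
Unset Strict Implicit.

Record Category := {
  Obj :> Type;
  Hom : Obj -> Obj -> Type;
  idm : forall X, Hom X X;
  comp : forall X Y Z, Hom Y Z -> Hom X Y -> Hom X Z;
  comp_idl : forall X Y (f : Hom X Y), comp (idm Y) f = f;
  comp_idr : forall X Y (f : Hom X Y), comp f (idm X) = f;
  comp_assoc : forall W X Y Z (h : Hom Y Z) (g : Hom X Y) (f : Hom W X),
      comp h (comp g f) = comp (comp h g) f }.

Arguments Hom c _ _ : clear implicits.
Arguments idm {c} X.
Arguments comp {c X Y Z} _ _.

Notation "g ∘ f" := (comp g f) (at level 40, left associativity).

Definition is_iso (C : Category) (X Y : C) (f : Hom C X Y) : Prop :=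
  exists g : Hom C Y X, g ∘ f = idm X /\ f ∘ g = idm Y.

Record Functor (C D : Category) := {
  fobj :> C -> D;
  fmap : forall X Y, Hom C X Y -> Hom D (fobj X) (fobj Y);
  fmap_id : forall X, fmap (idm X) = idm (fobj X);
  fmap_comp : forall X Y Z (g : Hom C Y Z) (f : Hom C X Y),
      fmap (g ∘ f) = fmap g ∘ fmap f }.

Arguments fmap {C D} f {X Y} _ : rename.

Record Comonad (C : Category) := {
  cfun :> Functor C C;
  cdelta : forall X, Hom C (cfun X) (cfun (cfun X));
  ceps : forall X, Hom C (cfun X) X;
  cdelta_nat : forall X Y (f : Hom C X Y),
      fmap cfun (fmap cfun f) ∘ cdelta X = cdelta Y ∘ fmap cfun f;
  ceps_nat : forall X Y (f : Hom C X Y), f ∘ ceps X = ceps Y ∘ fmap cfun f;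
  ccoassoc : forall X, fmap cfun (cdelta X) ∘ cdelta X = cdelta (cfun X) ∘ cdelta X;
  ccounit_l : forall X, ceps (cfun X) ∘ cdelta X = idm (cfun X);
  ccounit_r : forall X, fmap cfun (ceps X) ∘ cdelta X = idm (cfun X) }.

Arguments cdelta {C} c X.
Arguments ceps {C} c X.

Lemma sig_eq (T : Type) (P : T -> Prop) (a b : {x | P x}) :
  proj1_sig a = proj1_sig b -> a = b.
Proof.
  destruct a as [a pa], b as [b pb]; simpl; intros ->; f_equal;
  apply proof_irrelevance.
Qed.

Record MonoidalCategory := {
  mcat :> Category;
  tens : mcat -> mcat -> mcat;
  tensm : forall X X' Y Y', Hom mcat X X' -> Hom mcat Y Y' ->
      Hom mcat (tens X Y) (tens X' Y');
  tens_id : forall X Y, tensm (idm X) (idm Y) = idm (tens X Y);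
  tens_comp : forall X X' X'' Y Y' Y'' (f' : Hom mcat X' X'') (f : Hom mcat X X')
      (g' : Hom mcat Y' Y'') (g : Hom mcat Y Y'),
      tensm (f' ∘ f) (g' ∘ g) = tensm f' g' ∘ tensm f g;
  munit : mcat;
  alpha : forall X Y Z, Hom mcat (tens (tens X Y) Z) (tens X (tens Y Z));
  alpha_inv : forall X Y Z, Hom mcat (tens X (tens Y Z)) (tens (tens X Y) Z);
  alpha_iso1 : forall X Y Z, alpha_inv X Y Z ∘ alpha X Y Z = idm _;
  alpha_iso2 : forall X Y Z, alpha X Y Z ∘ alpha_inv X Y Z = idm _;
  alpha_nat : forall X X' Y Y' Z Z' (f : Hom mcat X X') (g : Hom mcat Y Y')
      (h : Hom mcat Z Z'),
      tensm f (tensm g h) ∘ alpha X Y Z = alpha X' Y' Z' ∘ tensm (tensm f g) h;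
  lam : forall X, Hom mcat (tens munit X) X;
  lam_inv : forall X, Hom mcat X (tens munit X);
  lam_iso1 : forall X, lam_inv X ∘ lam X = idm _;
  lam_iso2 : forall X, lam X ∘ lam_inv X = idm _;
  lam_nat : forall X Y (f : Hom mcat X Y), f ∘ lam X = lam Y ∘ tensm (idm munit) f;
  rho : forall X, Hom mcat (tens X munit) X;
  rho_inv : forall X, Hom mcat X (tens X munit);
  rho_iso1 : forall X, rho_inv X ∘ rho X = idm _;
  rho_iso2 : forall X, rho X ∘ rho_inv X = idm _;
  rho_nat : forall X Y (f : Hom mcat X Y), f ∘ rho X = rho Y ∘ tensm f (idm munit);
  pentagon : forall W X Y Z,
      alpha W X (tens Y Z) ∘ alpha (tens W X) Y Z
      = tensm (idm W) (alpha X Y Z) ∘ alpha W (tens X Y) Z ∘ tensm (alpha W X Y) (idm Z);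
  triangle : forall X Y,
      tensm (idm X) (lam Y) ∘ alpha X munit Y = tensm (rho X) (idm Y) }.

Arguments tens {m} _ _.
Arguments tensm {m X X' Y Y'} _ _.
Arguments munit {m}.
Arguments alpha {m} X Y Z.
Arguments lam {m} X.
Arguments lam_inv {m} X.
Arguments rho {m} X.

Notation "X ⊗ Y" := (tens X Y) (at level 30, right associativity).
Notation "f ⊠ g" := (tensm f g) (at level 30, right associativity).

Record OpmonoidalMonad (A : MonoidalCategory) := {
  Bo : A -> A;
  Bm : forall X Y, Hom A X Y -> Hom A (Bo X) (Bo Y);
  Bm_id : forall X, Bm (idm X) = idm (Bo X);
  Bm_comp : forall X Y Z (g : Hom A Y Z) (f : Hom A X Y),
      Bm (g ∘ f) = Bm g ∘ Bm f;
  mu : forall X, Hom A (Bo (Bo X)) (Bo X);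
  eta : forall X, Hom A X (Bo X);
  mu_nat : forall X Y (f : Hom A X Y), Bm f ∘ mu X = mu Y ∘ Bm (Bm f);
  eta_nat : forall X Y (f : Hom A X Y), Bm f ∘ eta X = eta Y ∘ f;
  mu_assoc : forall X, mu X ∘ Bm (mu X) = mu X ∘ mu (Bo X);
  mu_eta_l : forall X, mu X ∘ eta (Bo X) = idm (Bo X);
  mu_eta_r : forall X, mu X ∘ Bm (eta X) = idm (Bo X);
  B2 : forall X Y, Hom A (Bo (X ⊗ Y)) (Bo X ⊗ Bo Y);
  B0 : Hom A (Bo munit) munit;
  B2_nat : forall X X' Y Y' (f : Hom A X X') (g : Hom A Y Y'),
      (Bm f ⊠ Bm g) ∘ B2 X Y = B2 X' Y' ∘ Bm (f ⊠ g);
  B2_coassoc : forall X Y Z,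
      alpha (Bo X) (Bo Y) (Bo Z) ∘ (B2 X Y ⊠ idm (Bo Z)) ∘ B2 (X ⊗ Y) Z
      = (idm (Bo X) ⊠ B2 Y Z) ∘ B2 X (Y ⊗ Z) ∘ Bm (alpha X Y Z);
  B0_counit_l : forall X,
      lam (Bo X) ∘ (B0 ⊠ idm (Bo X)) ∘ B2 munit X = Bm (lam X);
  B0_counit_r : forall X,
      rho (Bo X) ∘ (idm (Bo X) ⊠ B0) ∘ B2 X munit = Bm (rho X);
  mu_B2 : forall X Y,
      B2 X Y ∘ mu (X ⊗ Y) = (mu X ⊠ mu Y) ∘ B2 (Bo X) (Bo Y) ∘ Bm (B2 X Y);
  mu_B0 : B0 ∘ mu munit = B0 ∘ Bm B0;
  eta_B2 : forall X Y, B2 X Y ∘ eta (X ⊗ Y) = eta X ⊠ eta Y;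
  eta_B0 : B0 ∘ eta munit = idm munit }.

Arguments Bo {A} b _ : rename.
Arguments Bm {A} b {X Y} _ : rename.
Arguments mu {A} b X : rename.
Arguments eta {A} b X : rename.
Arguments B2 {A} b X Y : rename.
Arguments B0 {A} b : rename.

Section Derived.
Local Obligation Tactic := idtac.
Variable A : MonoidalCategory.
Variable B : OpmonoidalMonad A.

Local Notation I := (@munit A).
Local Notation BI := (Bo B I).

Definition H_r (X Y : A) : Hom A (Bo B (Bo B X ⊗ Y)) (Bo B X ⊗ Bo B Y) :=
  (mu B X ⊠ idm (Bo B Y)) ∘ B2 B (Bo B X) Y.

Definition RightPreHopf : Prop := forall X : A, is_iso (H_r I X).

Definition thetaR (X : A) : Hom A (Bo B (BI ⊗ X)) (BI ⊗ Bo B X) :=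
  (mu B I ⊠ idm (Bo B X)) ∘ B2 B BI X.

(* the B-action of C^theta(X, alpha) *)
Definition rhoR (X : A) (al : Hom A (Bo B X) X) : Hom A (Bo B (BI ⊗ X)) (BI ⊗ X) :=
  (mu B I ⊠ al) ∘ B2 B BI X.

(* comultiplication and counit of the comonad C = B(1) (x) - ;
   the suppressed constraints are made explicit *)
Definition DeltaCR (X : A) : Hom A (BI ⊗ X) (BI ⊗ (BI ⊗ X)) :=
  alpha BI BI X ∘ ((B2 B I I ∘ Bm B (lam_inv I)) ⊠ idm X).

Definition epsCR (X : A) : Hom A (BI ⊗ X) X :=
  lam X ∘ (B0 B ⊠ idm X).

Record Alg := {
  acar : A;
  aact : Hom A (Bo B acar) acar;
  aact_unit : aact ∘ eta B acar = idm acar;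
  aact_assoc : aact ∘ Bm B aact = aact ∘ mu B acar }.

Definition AlgHom (x y : Alg) : Type :=
  { f : Hom A (acar x) (acar y) | f ∘ aact x = aact y ∘ Bm B f }.

Program Definition AlgCat : Category := {|
  Obj := Alg;
  Hom := AlgHom;
  idm x := exist _ (idm (acar x)) _;
  comp x y z (g : AlgHom y z) (f : AlgHom x y) := exist _ (proj1_sig g ∘ proj1_sig f) _ |}.
Next Obligation. intros; simpl. now rewrite comp_idl, Bm_id, comp_idr. Qed.
Next Obligation. intros; simpl.
  destruct g as [g hg], f as [f hf]; simpl.
  rewrite <- comp_assoc, hf, comp_assoc, hg, <- comp_assoc, Bm_comp; reflexivity.
Qed.
Next Obligation. intros; simpl. apply sig_eq; apply comp_idl. Qed.
Next Obligation. intros; simpl. apply sig_eq; apply comp_idr. Qed.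
Next Obligation. intros; simpl. apply sig_eq; apply comp_assoc. Qed.

Program Definition FreeAlg (X : A) : Alg := {|
  acar := Bo B X; aact := mu B X |}.
Next Obligation. intros; simpl. apply mu_eta_l. Qed.
Next Obligation. intros; simpl. apply mu_assoc. Qed.

Program Definition Tfun : Functor AlgCat AlgCat := {|
  fobj x := FreeAlg (acar x);
  fmap x y f := exist _ (Bm B (proj1_sig f)) _ |}.
Next Obligation. intros; simpl. apply mu_nat. Qed.
Next Obligation. intros; simpl. apply sig_eq; simpl; apply Bm_id. Qed.
Next Obligation. intros; simpl. apply sig_eq; simpl; apply Bm_comp. Qed.

Program Definition Tcom : Comonad AlgCat := {|
  cfun := Tfun;
  cdelta x := exist _ (Bm B (eta B (acar x))) _;
  ceps x := exist _ (aact x) _ |}.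
Next Obligation. intros; simpl. apply mu_nat. Qed.
Next Obligation. intros; simpl. symmetry; apply aact_assoc. Qed.
Next Obligation. intros; simpl.
  apply sig_eq; simpl. rewrite <- !Bm_comp, eta_nat; reflexivity.
Qed.
Next Obligation. intros; simpl. apply sig_eq; simpl. destruct f as [f hf]; exact hf. Qed.
Next Obligation. intros; simpl.
  apply sig_eq; simpl. rewrite <- !Bm_comp, eta_nat; reflexivity.
Qed.
Next Obligation. intros; simpl. apply sig_eq; simpl; apply mu_eta_r. Qed.
Next Obligation. intros; simpl. apply sig_eq; simpl. rewrite <- Bm_comp, aact_unit; apply Bm_id. Qed.

(* C^theta-coalgebras in A^B, i.e. objects of (A^B)_{C^theta}, with the
   C^theta structure maps written out on underlying morphisms *)
Record CoAlg := {
  calg : Alg;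
  cdel : Hom A (acar calg) (BI ⊗ acar calg);
  cdel_hom : cdel ∘ aact calg = rhoR (aact calg) ∘ Bm B cdel;
  cdel_coassoc : DeltaCR (acar calg) ∘ cdel = (idm BI ⊠ cdel) ∘ cdel;
  cdel_counit : epsCR (acar calg) ∘ cdel = idm (acar calg) }.

Definition CoAlgHom (c d : CoAlg) : Type :=
  { f : Hom A (acar (calg c)) (acar (calg d)) |
      f ∘ aact (calg c) = aact (calg d) ∘ Bm B f
      /\ (idm BI ⊠ f) ∘ cdel c = cdel d ∘ f }.

Program Definition CoalgCat : Category := {|
  Obj := CoAlg;
  Hom := CoAlgHom;
  idm c := exist _ (idm (acar (calg c))) _;
  comp x y z (g : CoAlgHom y z) (f : CoAlgHom x y) := exist _ (proj1_sig g ∘ proj1_sig f) _ |}.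
Next Obligation. intros; simpl.
  split.
  - now rewrite comp_idl, Bm_id, comp_idr.
  - now rewrite tens_id, comp_idl, comp_idr.
Qed.
Next Obligation. intros; simpl.
  destruct g as [g [hg hg']], f as [f [hf hf']]; simpl; split.
  - rewrite <- comp_assoc, hf, comp_assoc, hg, <- comp_assoc, Bm_comp; reflexivity.
  - rewrite <- (comp_idl (idm BI)), tens_comp, <- comp_assoc, hf', comp_assoc, hg',
      <- comp_assoc; reflexivity.
Qed.
Next Obligation. intros; simpl. apply sig_eq; apply comp_idl. Qed.
Next Obligation. intros; simpl. apply sig_eq; apply comp_idr. Qed.
Next Obligation. intros; simpl. apply sig_eq; apply comp_assoc. Qed.

Program Definition Vfun : Functor CoalgCat AlgCat := {|
  fobj c := calg c;
  fmap c d f := exist _ (proj1_sig f) _ |}.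
Next Obligation. intros; simpl. exact (proj1 (proj2_sig f)). Qed.
Next Obligation. intros; simpl. apply sig_eq; reflexivity. Qed.
Next Obligation. intros; simpl. apply sig_eq; reflexivity. Qed.

(* The facts asserting that C^theta, G, T^theta and chi as described in the
   paper are well defined (all are consequences of the opmonoidal monad
   axioms; they are asserted -- not assumed -- in the main statement). *)
Record WellDefined : Prop := {
  wd_rho : forall x : Alg,
      rhoR (aact x) ∘ eta B (BI ⊗ acar x) = idm _
      /\ rhoR (aact x) ∘ Bm B (rhoR (aact x)) = rhoR (aact x) ∘ mu B (BI ⊗ acar x);
  wd_Cf : forall (x y : Alg) (f : AlgHom x y),
      (idm BI ⊠ proj1_sig f) ∘ rhoR (aact x) = rhoR (aact y) ∘ Bm B (idm BI ⊠ proj1_sig f);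
  wd_DeltaC_hom : forall x : Alg,
      DeltaCR (acar x) ∘ rhoR (aact x) = rhoR (rhoR (aact x)) ∘ Bm B (DeltaCR (acar x));
  wd_epsC_hom : forall x : Alg,
      epsCR (acar x) ∘ rhoR (aact x) = aact x ∘ Bm B (epsCR (acar x));
  wd_DeltaC_nat : forall (X Y : A) (f : Hom A X Y),
      (idm BI ⊠ (idm BI ⊠ f)) ∘ DeltaCR X = DeltaCR Y ∘ (idm BI ⊠ f);
  wd_epsC_nat : forall (X Y : A) (f : Hom A X Y),
      f ∘ epsCR X = epsCR Y ∘ (idm BI ⊠ f);
  wd_C_coassoc : forall X : A,
      (idm BI ⊠ DeltaCR X) ∘ DeltaCR X = DeltaCR (BI ⊗ X) ∘ DeltaCR X;
  wd_C_counit_l : forall X : A, epsCR (BI ⊗ X) ∘ DeltaCR X = idm _;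
  wd_C_counit_r : forall X : A, (idm BI ⊠ epsCR X) ∘ DeltaCR X = idm _;
  wd_theta_hom : forall X : A,
      thetaR X ∘ mu B (BI ⊗ X) = rhoR (mu B X) ∘ Bm B (thetaR X);
  wd_theta_nat : forall (X Y : A) (f : Hom A X Y),
      (idm BI ⊠ Bm B f) ∘ thetaR X = thetaR Y ∘ Bm B (idm BI ⊠ f);
  wd_Tth_hom : forall c : CoAlg,
      (thetaR (acar (calg c)) ∘ Bm B (cdel c)) ∘ mu B (acar (calg c))
      = rhoR (mu B (acar (calg c))) ∘ Bm B (thetaR (acar (calg c)) ∘ Bm B (cdel c));
  wd_Tth_coassoc : forall c : CoAlg,
      DeltaCR (Bo B (acar (calg c))) ∘ (thetaR (acar (calg c)) ∘ Bm B (cdel c))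
      = (idm BI ⊠ (thetaR (acar (calg c)) ∘ Bm B (cdel c)))
          ∘ (thetaR (acar (calg c)) ∘ Bm B (cdel c));
  wd_Tth_counit : forall c : CoAlg,
      epsCR (Bo B (acar (calg c))) ∘ (thetaR (acar (calg c)) ∘ Bm B (cdel c)) = idm _;
  wd_Tth_map : forall (c d : CoAlg) (f : CoAlgHom c d),
      (idm BI ⊠ Bm B (proj1_sig f)) ∘ (thetaR (acar (calg c)) ∘ Bm B (cdel c))
      = (thetaR (acar (calg d)) ∘ Bm B (cdel d)) ∘ Bm B (proj1_sig f);
  wd_DeltaT : forall c : CoAlg,
      (idm BI ⊠ Bm B (eta B (acar (calg c)))) ∘ (thetaR (acar (calg c)) ∘ Bm B (cdel c))
      = (thetaR (Bo B (acar (calg c)))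
           ∘ Bm B (thetaR (acar (calg c)) ∘ Bm B (cdel c)))
        ∘ Bm B (eta B (acar (calg c)));
  wd_epsT : forall c : CoAlg,
      (idm BI ⊠ aact (calg c)) ∘ (thetaR (acar (calg c)) ∘ Bm B (cdel c))
      = cdel c ∘ aact (calg c) }.

Section WithWD.
Variable w : WellDefined.

Definition CthAlg (x : Alg) : Alg := {|
  acar := BI ⊗ acar x;
  aact := rhoR (aact x);
  aact_unit := proj1 (wd_rho w x);
  aact_assoc := proj2 (wd_rho w x) |}.

Program Definition Cthfun : Functor AlgCat AlgCat := {|
  fobj := CthAlg;
  fmap x y f := exist _ (idm BI ⊠ proj1_sig f) (wd_Cf w f) |}.
Next Obligation. intros; simpl. apply sig_eq; simpl; apply tens_id. Qed.
Next Obligation. intros; simpl. apply sig_eq; simpl. rewrite <- tens_comp, comp_idl; reflexivity. Qed.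

Program Definition Cth : Comonad AlgCat := {|
  cfun := Cthfun;
  cdelta x := exist _ (DeltaCR (acar x)) (wd_DeltaC_hom w x);
  ceps x := exist _ (epsCR (acar x)) (wd_epsC_hom w x) |}.
Next Obligation. intros; simpl. apply sig_eq; simpl; apply (wd_DeltaC_nat w). Qed.
Next Obligation. intros; simpl. apply sig_eq; simpl; apply (wd_epsC_nat w). Qed.
Next Obligation. intros; simpl. apply sig_eq; simpl; apply (wd_C_coassoc w). Qed.
Next Obligation. intros; simpl. apply sig_eq; simpl; apply (wd_C_counit_l w). Qed.
Next Obligation. intros; simpl. apply sig_eq; simpl; apply (wd_C_counit_r w). Qed.

Definition chi (x : Alg) : Hom AlgCat (Tcom (Cth x)) (Cth (Tcom x)) :=
  exist _ (thetaR (acar x)) (wd_theta_hom w (acar x)).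

Definition coact (c : CoAlg) : Hom AlgCat (Vfun c) (Cth (Vfun c)) :=
  exist _ (cdel c) (cdel_hom c).

Definition Gobj (x : Alg) : CoAlg := {|
  calg := CthAlg x;
  cdel := DeltaCR (acar x);
  cdel_hom := wd_DeltaC_hom w x;
  cdel_coassoc := eq_sym (wd_C_coassoc w (acar x));
  cdel_counit := wd_C_counit_l w (acar x) |}.

Program Definition Gfun : Functor AlgCat CoalgCat := {|
  fobj := Gobj;
  fmap x y f := exist _ (idm BI ⊠ proj1_sig f)
                  (conj (wd_Cf w f) (wd_DeltaC_nat w (proj1_sig f))) |}.
Next Obligation. intros; simpl. apply sig_eq; simpl; apply tens_id. Qed.
Next Obligation. intros; simpl. apply sig_eq; simpl. rewrite <- tens_comp, comp_idl; reflexivity. Qed.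

Definition TthObj (c : CoAlg) : CoAlg := {|
  calg := FreeAlg (acar (calg c));
  cdel := thetaR (acar (calg c)) ∘ Bm B (cdel c);
  cdel_hom := wd_Tth_hom w c;
  cdel_coassoc := wd_Tth_coassoc w c;
  cdel_counit := wd_Tth_counit w c |}.

Program Definition Tthfun : Functor CoalgCat CoalgCat := {|
  fobj := TthObj;
  fmap c d f := exist _ (Bm B (proj1_sig f))
                  (conj (mu_nat B (proj1_sig f)) (wd_Tth_map w f)) |}.
Next Obligation. intros; simpl. apply sig_eq; simpl; apply Bm_id. Qed.
Next Obligation. intros; simpl. apply sig_eq; simpl; apply Bm_comp. Qed.

Program Definition Tth : Comonad CoalgCat := {|
  cfun := Tthfun;
  cdelta c := exist _ (Bm B (eta B (acar (calg c))))
                (conj (mu_nat B (eta B (acar (calg c)))) (wd_DeltaT w c));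
  ceps c := exist _ (aact (calg c))
                (conj (eq_sym (aact_assoc (calg c))) (wd_epsT w c)) |}.
Next Obligation. intros; simpl.
  apply sig_eq; simpl. rewrite <- !Bm_comp, eta_nat; reflexivity.
Qed.
Next Obligation. intros; simpl. apply sig_eq; simpl. exact (proj1 (proj2_sig f)). Qed.
Next Obligation. intros; simpl.
  apply sig_eq; simpl. rewrite <- !Bm_comp, eta_nat; reflexivity.
Qed.
Next Obligation. intros; simpl. apply sig_eq; simpl; apply mu_eta_r. Qed.
Next Obligation. intros; simpl.
  apply sig_eq; simpl. rewrite <- Bm_comp, aact_unit; apply Bm_id.
Qed.

(* "Om implements an extension T^theta of T through V -| G":
   Om is a natural isomorphism T^theta G => G T and (G, Om) is a lax
   morphism of comonads from T^theta to T. *)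
Definition ImplementsExtension
    (Om : forall x : Alg, Hom CoalgCat (Tth (Gfun x)) (Gfun (Tcom x))) : Prop :=
  (forall (x y : Alg) (f : Hom AlgCat x y),
      fmap Gfun (fmap Tcom f) ∘ Om x = Om y ∘ fmap Tth (fmap Gfun f))
  /\ (forall x : Alg, is_iso (Om x))
  /\ (forall x : Alg,
      fmap Gfun (cdelta Tcom x) ∘ Om x
      = Om (Tcom x) ∘ fmap Tth (Om x) ∘ cdelta Tth (Gfun x))
  /\ (forall x : Alg, fmap Gfun (ceps Tcom x) ∘ Om x = ceps Tth (Gfun x)).

Definition LeftChiCoalgebra (Z : Category) (N : Functor AlgCat Z)
    (l : forall x : Alg, Hom Z (N (Cth x)) (N (Tcom x))) : Prop :=
  (forall (x y : Alg) (f : Hom AlgCat x y),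
      fmap N (fmap Tcom f) ∘ l x = l y ∘ fmap N (fmap Cth f))
  /\ (forall x : Alg,
      fmap N (cdelta Tcom x) ∘ l x
      = l (Tcom x) ∘ fmap N (chi x) ∘ l (Cth x) ∘ fmap N (cdelta Cth x))
  /\ (forall x : Alg, fmap N (ceps Tcom x) ∘ l x = fmap N (ceps Cth x)).

Definition TthOpcoalgebra (Z : Category) (N : Functor AlgCat Z)
    (nb : forall c : CoAlg, Hom Z (N (Vfun c)) (N (Vfun (Tth c)))) : Prop :=
  (forall (c d : CoAlg) (f : Hom CoalgCat c d),
      fmap N (fmap Vfun (fmap Tth f)) ∘ nb c = nb d ∘ fmap N (fmap Vfun f))
  /\ (forall c : CoAlg,
      fmap N (fmap Vfun (cdelta Tth c)) ∘ nb c = nb (Tth c) ∘ nb c)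
  /\ (forall c : CoAlg, fmap N (fmap Vfun (ceps Tth c)) ∘ nb c = idm _).

Definition lam_to_nabla (Z : Category) (N : Functor AlgCat Z)
    (l : forall x : Alg, Hom Z (N (Cth x)) (N (Tcom x))) :
    forall c : CoAlg, Hom Z (N (Vfun c)) (N (Vfun (Tth c))) :=
  fun c => l (Vfun c) ∘ fmap N (coact c).

Definition nabla_to_lam (Z : Category) (N : Functor AlgCat Z)
    (nb : forall c : CoAlg, Hom Z (N (Vfun c)) (N (Vfun (Tth c)))) :
    forall x : Alg, Hom Z (N (Cth x)) (N (Tcom x)) :=
  fun x => fmap N (fmap Tcom (ceps Cth x)) ∘ nb (Gfun x).

End WithWD.
End Derived.

Arguments thetaR {A} B X.
Arguments RightPreHopf {A} B.
Arguments WellDefined {A} B.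
Arguments acar {A B} a.
Arguments Alg {A} B.
Arguments AlgCat {A} B.
Arguments CoalgCat {A} B.
Arguments Tcom {A} B.
Arguments Tth {A B} w.
Arguments Gfun {A B} w.
Arguments ImplementsExtension {A B} w Om.
Arguments LeftChiCoalgebra {A B} w {Z} N l.
Arguments TthOpcoalgebra {A B} w {Z} N nb.
Arguments lam_to_nabla {A B} w {Z} N l c.
Arguments nabla_to_lam {A B} w {Z} N nb x.

(* Main.v *)
Require Import Defs.
From Stdlib Require Import ProofIrrelevance FunctionalExtensionality Setoid.

Ltac ra := repeat rewrite <- comp_assoc.
Ltac la := repeat rewrite comp_assoc.

Lemma ar {C : Category} {X Y Z W : C} {g : Hom C Y Z} {f : Hom C X Y} {h : Hom C X Z} :
  g ∘ f = h -> forall (k : Hom C W X), g ∘ (f ∘ k) = h ∘ k.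
Proof. intros <- k; apply comp_assoc. Qed.

Lemma ar2 {C : Category} {X Y Z U W : C} {a : Hom C U Z} {b : Hom C Y U} {c : Hom C X Y} {h : Hom C X Z} :
  a ∘ (b ∘ c) = h -> forall (k : Hom C W X), a ∘ (b ∘ (c ∘ k)) = h ∘ k.
Proof. intros <- k; rewrite !comp_assoc; reflexivity. Qed.

Lemma ar3 {C : Category} {X Y Z U V W : C} {a : Hom C U Z} {b : Hom C V U} {c : Hom C Y V} {d : Hom C X Y} {h : Hom C X Z} :
  a ∘ (b ∘ (c ∘ d)) = h -> forall (k : Hom C W X), a ∘ (b ∘ (c ∘ (d ∘ k))) = h ∘ k.
Proof. intros <- k; rewrite !comp_assoc; reflexivity. Qed.

Lemma ar4 {C : Category} {X Y Z U V T W : C} {a : Hom C U Z} {b : Hom C V U} {c : Hom C T V} {d : Hom C Y T} {e : Hom C X Y} {h : Hom C X Z} :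
  a ∘ (b ∘ (c ∘ (d ∘ e))) = h -> forall (k : Hom C W X), a ∘ (b ∘ (c ∘ (d ∘ (e ∘ k)))) = h ∘ k.
Proof. intros <- k; rewrite !comp_assoc; reflexivity. Qed.

Ltac inst H := repeat match type of H with forall x : ?T, _ =>
  let e := fresh "e" in evar (e : T); specialize (H e); subst e end.

Ltac rw H := let H' := fresh "H" in pose proof H as H'; inst H'; repeat rewrite <- comp_assoc in H';
  first [ rewrite H' | rewrite (ar H') | rewrite (ar2 H') | rewrite (ar3 H') | rewrite (ar4 H') ];
  clear H'; ra.

Section Mon.
Variable M : MonoidalCategory.

Lemma tc {X X' X'' Y Y' Y'' : M} {f' : Hom M X' X''} {f : Hom M X X'}
      {g' : Hom M Y' Y''} {g : Hom M Y Y'} :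
  (f' ⊠ g') ∘ (f ⊠ g) = (f' ∘ f) ⊠ (g' ∘ g).
Proof. symmetry; apply tens_comp. Qed.

Lemma itc {X Y Y' Y'' : M} (g' : Hom M Y' Y'') (g : Hom M Y Y') :
  idm X ⊠ (g' ∘ g) = (idm X ⊠ g') ∘ (idm X ⊠ g).
Proof. rewrite <- tens_comp, comp_idl; reflexivity. Qed.

Lemma tci {X Y Y' Y'' : M} (g' : Hom M Y' Y'') (g : Hom M Y Y') :
  (g' ∘ g) ⊠ idm X = (g' ⊠ idm X) ∘ (g ⊠ idm X).
Proof. rewrite <- tens_comp, comp_idl; reflexivity. Qed.

Lemma lam_cancel (X Y : M) (f g : Hom M X Y) : idm munit ⊠ f = idm munit ⊠ g -> f = g.
Proof.
  intros H.
  assert (E : forall h : Hom M X Y, h = lam Y ∘ (idm munit ⊠ h) ∘ lam_inv X).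
  { intro h. rewrite <- lam_nat, <- comp_assoc, lam_iso2, comp_idr; reflexivity. }
  rewrite (E f), (E g), H; reflexivity.
Qed.

Lemma rho_cancel (X Y : M) (f g : Hom M X Y) : f ⊠ idm munit = g ⊠ idm munit -> f = g.
Proof.
  intros H.
  assert (E : forall h : Hom M X Y, h = rho Y ∘ (h ⊠ idm munit) ∘ rho_inv X).
  { intro h. rewrite <- rho_nat, <- comp_assoc, rho_iso2, comp_idr; reflexivity. }
  rewrite (E f), (E g), H; reflexivity.
Qed.

Lemma K1 (X Y : M) : lam (X ⊗ Y) ∘ alpha munit X Y = lam X ⊠ idm Y.
Proof.
  apply lam_cancel.
  set (P := alpha munit (munit ⊗ X) Y ∘ (alpha munit munit X ⊠ idm Y)).
  set (Pi := (alpha_inv munit munit X ⊠ idm Y) ∘ alpha_inv munit (munit ⊗ X) Y).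
  assert (HP : P ∘ Pi = idm _).
  { unfold P, Pi. ra. rewrite (ar tc), alpha_iso2, comp_idl, tens_id, comp_idl.
    apply alpha_iso2. }
  assert (E : (idm munit ⊠ (lam (X ⊗ Y) ∘ alpha munit X Y)) ∘ P
              = (idm munit ⊠ (lam X ⊠ idm Y)) ∘ P).
  { unfold P.
    rewrite itc. ra. rw (eq_sym (pentagon munit munit X Y)).
    rw triangle. rewrite <- (tens_id X Y). rw alpha_nat.
    rw alpha_nat. rw @tc. rw triangle. rewrite comp_idl. reflexivity. }
  rewrite <- (comp_idr (_ ⊠ (lam (X ⊗ Y) ∘ _))), <- HP, comp_assoc, E, <- comp_assoc, HP, comp_idr.
  reflexivity.
Qed.

Lemma lam_lam (X : M) : lam (munit ⊗ X) = idm munit ⊠ lam X.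
Proof.
  assert (H := lam_nat (lam X)).
  rewrite <- (comp_idl (lam (munit ⊗ X))), <- (lam_iso1 X), <- comp_assoc, H,
    comp_assoc, lam_iso1, comp_idl; reflexivity.
Qed.

Lemma K2 : lam (@munit M) = rho munit.
Proof.
  apply rho_cancel. rewrite <- triangle, <- K1, lam_lam. reflexivity.
Qed.

End Mon.
Arguments tc {M X X' X'' Y Y' Y'' f' f g' g}.
Ltac rwe H := first [ rewrite H | rewrite (ar H) | rewrite (ar2 H) | rewrite (ar3 H) | rewrite (ar4 H) ]; ra.
Ltac tn := repeat (first [rewrite tc | rewrite (ar tc)]; ra); repeat rewrite comp_idl; repeat rewrite comp_idr.

Section MB.
Variable A : MonoidalCategory.
Variable B : OpmonoidalMonad A.
Local Notation I := (@munit A).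
Local Notation BI := (Bo B I).
Local Notation d := (B2 B I I ∘ Bm B (lam_inv I)).

Lemma L_dinv : alpha I I I ∘ (lam_inv I ⊠ idm I) ∘ lam_inv I = (idm I ⊠ lam_inv I) ∘ lam_inv I.
Proof.
  assert (Ha : alpha I I I = (idm I ⊠ lam_inv I) ∘ (lam I ⊠ idm I)).
  { rewrite K2, <- triangle. ra. rewrite (ar (eq_sym (itc _ _ _))).
    rewrite lam_iso1, tens_id, comp_idl; reflexivity. }
  rewrite Ha. ra. rewrite (ar (tc (f:=lam_inv I))). rewrite lam_iso2, comp_idl, tens_id, comp_idl. reflexivity.
Qed.

Lemma L_dmu : d ∘ mu B I = (mu B I ⊠ mu B I) ∘ B2 B BI BI ∘ Bm B d.
Proof.
  ra. rewrite mu_nat. rw (mu_B2 B I I). rewrite Bm_comp. reflexivity.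
Qed.

Lemma L_dcoassoc : alpha BI BI BI ∘ (d ⊠ idm BI) ∘ d = (idm BI ⊠ d) ∘ d.
Proof.
  rewrite tci, itc.
  replace (Bm B (lam_inv I) ⊠ idm BI) with (Bm B (lam_inv I) ⊠ Bm B (idm I))
    by (rewrite Bm_id; reflexivity).
  replace (idm BI ⊠ Bm B (lam_inv I)) with (Bm B (idm I) ⊠ Bm B (lam_inv I))
    by (rewrite Bm_id; reflexivity).
  ra. rw (B2_nat B). rw (B2_nat B).
  rw (B2_coassoc B I I I).
  rewrite <- !Bm_comp. f_equal. f_equal. f_equal.
  la. apply L_dinv.
Qed.

Lemma L_Delta_gen (X Y : A) (g : Hom A (Bo B X) Y) :
  DeltaCR B Y ∘ ((mu B I ⊠ g) ∘ B2 B BI X)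
  = (mu B I ⊠ ((mu B I ⊠ g) ∘ B2 B BI X)) ∘ B2 B BI (BI ⊗ X) ∘ Bm B (DeltaCR B X).
Proof.
  unfold DeltaCR.
  replace (mu B I ⊠ ((mu B I ⊠ g) ∘ B2 B BI X))
    with ((mu B I ⊠ (mu B I ⊠ g)) ∘ (idm _ ⊠ B2 B BI X)) by (rewrite tc, comp_idr; reflexivity).
  rewrite Bm_comp. ra.
  rw (eq_sym (B2_coassoc B BI BI X)).
  replace (Bm B ((B2 B I I ∘ Bm B (lam_inv I)) ⊠ idm X))
    with (Bm B (d ⊠ idm X)) by reflexivity.
  rw (eq_sym (B2_nat B d (idm X))). rewrite Bm_id.
  rw @alpha_nat. rw @tc. rw @tc. rw @tc.
  f_equal. rewrite !comp_idr, !comp_idl. f_equal.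
  pose proof L_dmu as H. ra. repeat rewrite <- comp_assoc in H. rewrite H. reflexivity.
Qed.

Lemma L_eps_gen (X Y : A) (g : Hom A (Bo B X) Y) :
  epsCR B Y ∘ ((mu B I ⊠ g) ∘ B2 B BI X) = g ∘ Bm B (epsCR B X).
Proof.
  unfold epsCR.
  replace (mu B I ⊠ g) with ((idm _ ⊠ g) ∘ (mu B I ⊠ idm _)) by (rewrite tc, comp_idl, comp_idr; reflexivity).
  ra. rw @tc. rewrite comp_idl, comp_idr.
  replace (B0 B ⊠ g) with ((idm _ ⊠ g) ∘ (B0 B ⊠ idm _)) by (rewrite tc, comp_idl, comp_idr; reflexivity).
  ra. rw (eq_sym (lam_nat g)). f_equal.
  rw @tc. rewrite mu_B0, comp_idl.
  replace ((B0 B ∘ Bm B (B0 B)) ⊠ idm (Bo B X)) with ((B0 B ⊠ idm _) ∘ (Bm B (B0 B) ⊠ Bm B (idm X)))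
    by (rewrite tc, Bm_id, comp_idl; reflexivity).
  ra. rw (B2_nat B). rw (B0_counit_l B). rewrite Bm_comp. reflexivity.
Qed.

End MB.

Section MB3.
Variable A : MonoidalCategory.
Variable B : OpmonoidalMonad A.
Local Notation I := (@munit A).
Local Notation BI := (Bo B I).
Local Notation d := (B2 B I I ∘ Bm B (lam_inv I)).

Lemma B2_nat_r {X X' Y Y' : A} (f : Hom A X X') (g : Hom A Y Y') :
  B2 B X' Y' ∘ Bm B (f ⊠ g) = (Bm B f ⊠ Bm B g) ∘ B2 B X Y.
Proof. symmetry; apply B2_nat. Qed.

Lemma L_theta_hom (X : A) : thetaR B X ∘ mu B (BI ⊗ X) = rhoR (mu B X) ∘ Bm B (thetaR B X).
Proof.
  unfold thetaR, rhoR. rewrite Bm_comp. ra. rw (mu_B2 B). 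
  replace (Bm B (mu B I ⊠ idm X)) with (Bm B (mu B I ⊠ idm X)) by reflexivity.
  rw (B2_nat_r (mu B I) (idm (Bo B X))). rewrite Bm_id. tn. rewrite mu_assoc. reflexivity.
Qed.

Lemma L_theta_nat (X Y : A) (f : Hom A X Y) :
  (idm BI ⊠ Bm B f) ∘ thetaR B X = thetaR B Y ∘ Bm B (idm BI ⊠ f).
Proof.
  unfold thetaR. ra. rw (B2_nat_r (idm BI) f). rewrite Bm_id. tn. reflexivity.
Qed.

Lemma L_theta_eta (X : A) : thetaR B X ∘ eta B (BI ⊗ X) = idm BI ⊠ eta B X.
Proof. unfold thetaR. ra. rewrite eta_B2. tn. rewrite mu_eta_l. reflexivity. Qed.

Lemma L_eps_theta (X : A) : epsCR B (Bo B X) ∘ thetaR B X = Bm B (epsCR B X).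
Proof. unfold thetaR. rewrite L_eps_gen, comp_idl. reflexivity. Qed.

Lemma L_Delta_theta (X : A) :
  DeltaCR B (Bo B X) ∘ thetaR B X
  = (idm BI ⊠ thetaR B X) ∘ thetaR B (BI ⊗ X) ∘ Bm B (DeltaCR B X).
Proof.
  unfold thetaR at 1. rewrite L_Delta_gen. unfold thetaR. ra. tn. reflexivity.
Qed.

Lemma L_rho_unit (x : Alg B) : rhoR (aact x) ∘ eta B (BI ⊗ acar x) = idm _.
Proof. unfold rhoR. ra. rewrite eta_B2. tn. rewrite mu_eta_l, aact_unit, tens_id. reflexivity. Qed.

Lemma L_rho_assoc (x : Alg B) :
  rhoR (aact x) ∘ Bm B (rhoR (aact x)) = rhoR (aact x) ∘ mu B (BI ⊗ acar x).
Proof.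
  unfold rhoR. rewrite Bm_comp. ra. rw (mu_B2 B).
  rw (B2_nat_r (mu B I) (aact x)). tn. rewrite mu_assoc, aact_assoc. reflexivity.
Qed.

Lemma L_Cf (x y : Alg B) (f : AlgHom x y) :
  (idm BI ⊠ proj1_sig f) ∘ rhoR (aact x) = rhoR (aact y) ∘ Bm B (idm BI ⊠ proj1_sig f).
Proof.
  destruct f as [f hf]; simpl. unfold rhoR. ra. rw (B2_nat_r (idm BI) f). rewrite Bm_id. tn.
  rewrite hf. reflexivity.
Qed.

Lemma L_DeltaC_nat (X Y : A) (f : Hom A X Y) :
  (idm BI ⊠ (idm BI ⊠ f)) ∘ DeltaCR B X = DeltaCR B Y ∘ (idm BI ⊠ f).
Proof. unfold DeltaCR. ra. rw @alpha_nat. rewrite tens_id. tn. reflexivity. Qed.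

Lemma L_epsC_nat (X Y : A) (f : Hom A X Y) :
  f ∘ epsCR B X = epsCR B Y ∘ (idm BI ⊠ f).
Proof. unfold epsCR. rewrite comp_assoc, lam_nat. ra. tn. reflexivity. Qed.

Lemma L_C_coassoc (X : A) :
  (idm BI ⊠ DeltaCR B X) ∘ DeltaCR B X = DeltaCR B (BI ⊗ X) ∘ DeltaCR B X.
Proof.
  unfold DeltaCR. rewrite <- (tens_id BI X). rewrite itc. ra.
  rw (alpha_nat (idm BI) (d) (idm X)).
  rw (alpha_nat (d) (idm BI) (idm X)).
  rw (pentagon BI BI BI X).
  tn. pose proof (L_dcoassoc A B) as H. ra. repeat rewrite <- comp_assoc in H. rewrite H. reflexivity.
Qed.


Lemma L_C_counit_l (X : A) : epsCR B (BI ⊗ X) ∘ DeltaCR B X = idm _.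
Proof.
  unfold epsCR, DeltaCR. rewrite <- (tens_id BI X). ra.
  rw (alpha_nat (B0 B) (idm BI) (idm X)).
  rw (K1 A BI X). tn. rw (B0_counit_l B I).
  rewrite <- Bm_comp, lam_iso2, Bm_id, tens_id. reflexivity.
Qed.

Lemma L_C_counit_r (X : A) : (idm BI ⊠ epsCR B X) ∘ DeltaCR B X = idm _.
Proof.
  unfold epsCR, DeltaCR. rewrite itc. ra.
  rw (alpha_nat (idm BI) (B0 B) (idm X)).
  rw (triangle BI X). tn. rw (B0_counit_r B I).
  rewrite <- K2, <- Bm_comp, lam_iso2, Bm_id, tens_id. reflexivity.
Qed.


Lemma L_Tth_hom (c : CoAlg B) :
      (thetaR B (acar (calg c)) ∘ Bm B (cdel c)) ∘ mu B (acar (calg c))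
      = rhoR (mu B (acar (calg c))) ∘ Bm B (thetaR B (acar (calg c)) ∘ Bm B (cdel c)).
Proof.
  ra. rewrite mu_nat. la. rewrite L_theta_hom. rewrite Bm_comp. la. reflexivity.
Qed.

Lemma L_Tth_coassoc (c : CoAlg B) :
      DeltaCR B (Bo B (acar (calg c))) ∘ (thetaR B (acar (calg c)) ∘ Bm B (cdel c))
      = (idm BI ⊠ (thetaR B (acar (calg c)) ∘ Bm B (cdel c)))
          ∘ (thetaR B (acar (calg c)) ∘ Bm B (cdel c)).
Proof.
  rewrite itc. ra. rw (L_theta_nat _ _ (cdel c)).
  rewrite <- Bm_comp, <- cdel_coassoc, Bm_comp.
  la. rewrite L_Delta_theta. reflexivity.
Qed.

Lemma L_Tth_counit (c : CoAlg B) :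
      epsCR B (Bo B (acar (calg c))) ∘ (thetaR B (acar (calg c)) ∘ Bm B (cdel c)) = idm _.
Proof.
  la. rewrite L_eps_theta, <- Bm_comp, cdel_counit, Bm_id. reflexivity.
Qed.

Lemma L_Tth_map (c d : CoAlg B) (f : CoAlgHom c d) :
      (idm BI ⊠ Bm B (proj1_sig f)) ∘ (thetaR B (acar (calg c)) ∘ Bm B (cdel c))
      = (thetaR B (acar (calg d)) ∘ Bm B (cdel d)) ∘ Bm B (proj1_sig f).
Proof.
  destruct f as [f [hf1 hf2]]; simpl.
  la. rewrite L_theta_nat. ra. rewrite <- !Bm_comp, hf2. reflexivity.
Qed.

Lemma L_DeltaT (c : CoAlg B) :
      (idm BI ⊠ Bm B (eta B (acar (calg c)))) ∘ (thetaR B (acar (calg c)) ∘ Bm B (cdel c))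
      = (thetaR B (Bo B (acar (calg c)))
           ∘ Bm B (thetaR B (acar (calg c)) ∘ Bm B (cdel c)))
        ∘ Bm B (eta B (acar (calg c))).
Proof.
  rewrite Bm_comp. ra. rewrite <- (Bm_comp B (Bm B (cdel c))), eta_nat, Bm_comp.
  rewrite (comp_assoc (Bm B (thetaR B _))), <- Bm_comp, L_theta_eta.
  la. rewrite L_theta_nat. reflexivity.
Qed.

Lemma L_epsT (c : CoAlg B) :
      (idm BI ⊠ aact (calg c)) ∘ (thetaR B (acar (calg c)) ∘ Bm B (cdel c))
      = cdel c ∘ aact (calg c).
Proof.
  rewrite cdel_hom. unfold thetaR, rhoR. ra. tn. reflexivity.
Qed.

Lemma WD : WellDefined B.
Proof.
  constructor.
  - intro x; split; [apply L_rho_unit | apply L_rho_assoc].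
  - apply L_Cf.
  - intro x. apply L_Delta_gen.
  - intro x. apply L_eps_gen.
  - apply L_DeltaC_nat.
  - apply L_epsC_nat.
  - apply L_C_coassoc.
  - apply L_C_counit_l.
  - apply L_C_counit_r.
  - apply L_theta_hom.
  - apply L_theta_nat.
  - apply L_Tth_hom.
  - apply L_Tth_coassoc.
  - apply L_Tth_counit.
  - apply L_Tth_map.
  - apply L_DeltaT.
  - apply L_epsT.
Qed.

End MB3.

Section MB4.
Variable A : MonoidalCategory.
Variable B : OpmonoidalMonad A.
Variable w : WellDefined B.
Local Notation I := (@munit A).
Local Notation BI := (Bo B I).

Definition Om (x : Alg B) : Hom (CoalgCat B) (Tth w (Gfun w x)) (Gfun w (Tcom B x)).
Proof.
  refine (exist _ (thetaR B (acar x)) _).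
  split.
  - exact (L_theta_hom A B (acar x)).
  - simpl. symmetry. rewrite L_Delta_theta. ra. reflexivity.
Defined.

Lemma inv_hom (X Y FX FY : A) (f : Hom A X Y) (g : Hom A Y X) (a : Hom A FX X) (b : Hom A FY Y)
  (Ff : Hom A FX FY) (Fg : Hom A FY FX) :
  g ∘ f = idm _ -> Ff ∘ Fg = idm _ -> f ∘ a = b ∘ Ff -> g ∘ b = a ∘ Fg.
Proof.
  intros H1 H2 H3.
  rewrite <- (comp_idr b), <- H2, (comp_assoc b Ff Fg), <- H3. la. rewrite H1, comp_idl. reflexivity.
Qed.

Lemma inv_cohom (X Y FX FY : A) (f : Hom A X Y) (g : Hom A Y X) (a : Hom A X FX) (b : Hom A Y FY)
  (Ff : Hom A FX FY) (Fg : Hom A FY FX) :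
  f ∘ g = idm _ -> Fg ∘ Ff = idm _ -> Ff ∘ a = b ∘ f -> Fg ∘ b = a ∘ g.
Proof.
  intros H1 H2 H3.
  rewrite <- (comp_idr b), <- H1, (comp_assoc b f g), <- H3. la. rewrite H2, comp_idl. reflexivity.
Qed.

Lemma Om_ext (H : RightPreHopf B) : ImplementsExtension w Om.
Proof.
  split; [|split; [|split]].
  - intros x y f. apply sig_eq; simpl. apply L_theta_nat.
  - intros x. destruct (H (acar x)) as [g [Hg1 Hg2]].
    change (H_r B munit (acar x)) with (thetaR B (acar x)) in Hg1, Hg2.
    assert (P : (g ∘ rhoR (mu B (acar x)) = mu B (BI ⊗ acar x) ∘ Bm B g)
       /\ (idm BI ⊠ g) ∘ DeltaCR B (Bo B (acar x))
          = (thetaR B (BI ⊗ acar x) ∘ Bm B (DeltaCR B (acar x))) ∘ g).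
    { split.
      - eapply inv_hom; [exact Hg1 | | exact (L_theta_hom A B (acar x))].
        rewrite <- Bm_comp, Hg2, Bm_id. reflexivity.
      - apply (inv_cohom _ _ _ _ (thetaR B (acar x)) g _ _ (idm BI ⊠ thetaR B (acar x)) (idm BI ⊠ g)); [exact Hg2 | | ].
        + rewrite tc, Hg1, comp_idl, tens_id. reflexivity.
        + symmetry. rewrite L_Delta_theta. ra. reflexivity. }
    exists (exist _ g P). split; apply sig_eq; simpl; assumption.
  - intros x. apply sig_eq; simpl.
    rewrite <- comp_assoc, <- Bm_comp, L_theta_eta. rewrite <- L_theta_nat. reflexivity.
  - intros x. apply sig_eq; simpl. unfold thetaR, rhoR. ra. tn. reflexivity.
Qed.


Section Corr.
Variable Z : Category.
Variable N : Functor (AlgCat B) Z.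

Lemma to_nabla_ok l : LeftChiCoalgebra w N l -> TthOpcoalgebra w N (lam_to_nabla w N l).
Proof.
  intros [Hn [Hd He]]. unfold TthOpcoalgebra, lam_to_nabla. split; [|split].
  - intros c d f.
    assert (E1 : fmap (Vfun B) (fmap (Tth w) f) = fmap (Tcom B) (fmap (Vfun B) f))
      by (apply sig_eq; reflexivity).
    rewrite E1.
    assert (K : fmap N (fmap (Tcom B) (fmap (Vfun B) f)) ∘ (l (Vfun B c) ∘ fmap N (coact w c))
      = (l (Vfun B d) ∘ fmap N (coact w d)) ∘ fmap N (fmap (Vfun B) f)).
    { rewrite comp_assoc, Hn. ra. rewrite <- !fmap_comp. f_equal. f_equal.
      apply sig_eq; simpl. destruct f as [f [hf1 hf2]]; simpl. exact hf2. }
    exact K.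
  - intros c.
    assert (E1 : fmap (Vfun B) (cdelta (Tth w) c) = cdelta (Tcom B) (Vfun B c))
      by (apply sig_eq; reflexivity).
    rewrite E1.
    replace (coact w (Tth w c)) with (chi w (Vfun B c) ∘ fmap (Tcom B) (coact w c))
      by (apply sig_eq; reflexivity).
    assert (K : fmap N (cdelta (Tcom B) (Vfun B c)) ∘ (l (Vfun B c) ∘ fmap N (coact w c))
      = (l (Tcom B (Vfun B c)) ∘ fmap N (chi w (Vfun B c) ∘ fmap (Tcom B) (coact w c)))
         ∘ (l (Vfun B c) ∘ fmap N (coact w c))).
    { rewrite comp_assoc, Hd. ra.
      rewrite <- (fmap_comp N (cdelta (Cth w) (Vfun B c))).
      replace (cdelta (Cth w) (Vfun B c) ∘ coact w c) with (fmap (Cth w) (coact w c) ∘ coact w c)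
        by (apply sig_eq; simpl; symmetry; exact (cdel_coassoc c)).
      rewrite fmap_comp.
      rewrite (ar (eq_sym (Hn _ _ (coact w c)))). ra.
      rewrite fmap_comp. ra. reflexivity. }
    exact K.
  - intros c.
    assert (E1 : fmap (Vfun B) (ceps (Tth w) c) = ceps (Tcom B) (Vfun B c))
      by (apply sig_eq; reflexivity).
    rewrite E1.
    assert (K : fmap N (ceps (Tcom B) (Vfun B c)) ∘ (l (Vfun B c) ∘ fmap N (coact w c)) = idm _).
    { rewrite comp_assoc, He, <- fmap_comp.
      replace (ceps (Cth w) (Vfun B c) ∘ coact w c) with (idm (Vfun B c))
        by (apply sig_eq; simpl; symmetry; exact (cdel_counit c)).
      apply fmap_id. }
    exact K.
Qed.


End Corr.
End MB4.

From Stdlib Require Import ssreflect.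

Lemma comp_eq_l {C : Category} {X Y Z : C} (a b : Hom C Y Z) (k : Hom C X Y) : a = b -> a ∘ k = b ∘ k.
Proof. intros ->; reflexivity. Qed.
Lemma fmap_eq {C D : Category} (F : Functor C D) {X Y : C} (a b : Hom C X Y) : a = b -> fmap F a = fmap F b.
Proof. intros ->; reflexivity. Qed.

Lemma comp_eq_r {C : Category} {X Y Z : C} (a b : Hom C X Y) (k : Hom C Y Z) : a = b -> k ∘ a = k ∘ b.
Proof. intros ->; reflexivity. Qed.

Section MB5.
Variable A : MonoidalCategory.
Variable B : OpmonoidalMonad A.
Variable w : WellDefined B.
Local Notation I := (@munit A).
Local Notation BI := (Bo B I).
Local Notation Om := (Om A B w).
Section Corr.
Variable Z : Category.
Variable N : Functor (AlgCat B) Z.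

Definition DeltaG (x : Alg B) : Hom (CoalgCat B) (Gfun w x) (Gfun w (Cth w x)) :=
  exist _ (DeltaCR B (acar x)) (conj (wd_DeltaC_hom w x) (wd_C_coassoc w (acar x))).

Definition unitG (c : CoAlg B) : Hom (CoalgCat B) c (Gfun w (Vfun B c)) :=
  exist _ (cdel c) (conj (cdel_hom c) (eq_sym (cdel_coassoc c))).

Lemma to_lam_ok nb : TthOpcoalgebra w N nb -> LeftChiCoalgebra w N (nabla_to_lam w N nb).
Proof.
  intros [Hn [Hd He]]. unfold LeftChiCoalgebra, nabla_to_lam. split; [|split].
  - intros x y f.
    replace (fmap (Cth w) f) with (fmap (Vfun B) (fmap (Gfun w) f)) by (apply sig_eq; reflexivity).
    pose proof (Hn _ _ (fmap (Gfun w) f)) as H1.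
    Ltac cb := cbn [fobj cfun Tcom Tfun Cth Cthfun Vfun Gfun Gobj calg Tth Tthfun TthObj].
    cb. cbn [fobj cfun Tcom Tfun Cth Cthfun Vfun Gfun Gobj calg Tth Tthfun TthObj] in H1.
    ra. rewrite -H1. la. rewrite -!fmap_comp. f_equal. f_equal.
    apply sig_eq; simpl. rewrite -!Bm_comp. f_equal. apply (wd_epsC_nat w).
  - intros x.
    replace (cdelta (Cth w) x) with (fmap (Vfun B) (DeltaG x)) by (apply sig_eq; reflexivity).
    replace (chi w x) with (fmap (Vfun B) (Om x)) by (apply sig_eq; reflexivity).
    ra. rewrite -(Hn _ _ (DeltaG x)). ra.
    rewrite (ar (eq_sym (fmap_comp N (fmap (Tcom B) (ceps (Cth w) (Cth w x))) (fmap (Vfun B) (fmap (Tth w) (DeltaG x)))))).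
    replace (fmap (Tcom B) (ceps (Cth w) (Cth w x)) ∘ fmap (Vfun B) (fmap (Tth w) (DeltaG x)))
      with (idm (Tcom B (Cth w x)))
      by (apply sig_eq; simpl; rewrite -Bm_comp (wd_C_counit_l w) Bm_id; reflexivity).
    rewrite fmap_id comp_idl.
    rewrite (ar (eq_sym (Hn _ _ (Om x)))). ra.
    rewrite (ar (eq_sym (fmap_comp N _ _))).
    la. rewrite -(fmap_comp N). ra.
    replace (cdelta (Tcom B) x ∘ fmap (Tcom B) (ceps (Cth w) x))
      with (fmap (Tcom B) (fmap (Tcom B) (ceps (Cth w) x)) ∘ fmap (Vfun B) (cdelta (Tth w) (Gfun w x)))
      by (apply sig_eq; simpl; rewrite -!Bm_comp eta_nat; reflexivity).
    rewrite (fmap_comp N (fmap (Tcom B) (fmap (Tcom B) (ceps (Cth w) x))) (fmap (Vfun B) (cdelta (Tth w) (Gfun w x)))). ra. pose proof (Hd (Gfun w x)) as H3. cb. cbn [fobj cfun Tcom Tfun Cth Cthfun Vfun Gfun Gobj calg Tth Tthfun TthObj] in H3. rewrite H3. la. apply comp_eq_l. apply comp_eq_l. apply fmap_eq.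
    apply sig_eq; simpl. rewrite -Bm_comp L_eps_theta. reflexivity.
  - intros x.
    la. rewrite -fmap_comp.
    replace (ceps (Tcom B) x ∘ fmap (Tcom B) (ceps (Cth w) x))
      with (ceps (Cth w) x ∘ fmap (Vfun B) (ceps (Tth w) (Gfun w x)))
      by (apply sig_eq; simpl; apply (wd_epsC_hom w)).
    rewrite fmap_comp. ra. rewrite He comp_idr. reflexivity.
Qed.


Lemma rt1 l : LeftChiCoalgebra w N l -> nabla_to_lam w N (lam_to_nabla w N l) = l.
Proof.
  intros [Hn [Hd He]]. apply functional_extensionality_dep; intro x.
  unfold nabla_to_lam, lam_to_nabla.
  pose proof (Hn _ _ (ceps (Cth w) x)) as H1.
  cb. cbn [fobj cfun Tcom Tfun Cth Cthfun Vfun Gfun Gobj calg Tth Tthfun TthObj] in H1.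
  la. rewrite H1. ra. rewrite -fmap_comp.
  etransitivity; [|apply comp_idr]. apply comp_eq_r.
  transitivity (fmap N (@idm (AlgCat B) (CthAlg w x))); [|apply fmap_id].
  apply fmap_eq. apply sig_eq; simpl. apply (wd_C_counit_r w).
Qed.

Lemma rt2 nb : TthOpcoalgebra w N nb -> lam_to_nabla w N (nabla_to_lam w N nb) = nb.
Proof.
  intros [Hn [Hd He]]. apply functional_extensionality_dep; intro c.
  unfold nabla_to_lam, lam_to_nabla.
  replace (coact w c) with (fmap (Vfun B) (unitG c)) by (apply sig_eq; reflexivity).
  pose proof (Hn _ _ (unitG c)) as H1.
  cb. cbn [fobj cfun Tcom Tfun Cth Cthfun Vfun Gfun Gobj calg Tth Tthfun TthObj] in H1.
  ra. rewrite -H1. la. rewrite -fmap_comp.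
  etransitivity; [|apply comp_idl]. apply comp_eq_l.
  transitivity (fmap N (@idm (AlgCat B) (FreeAlg B (acar (calg c))))); [|apply fmap_id]. apply fmap_eq.
  apply sig_eq; simpl. rewrite -Bm_comp (cdel_counit c) Bm_id. reflexivity.
Qed.

End Corr.
End MB5.


Theorem corollary3p15 (A : MonoidalCategory) (B : OpmonoidalMonad A) :
  RightPreHopf B ->
  WellDefined B /\
  forall w : WellDefined B,
    (exists Om : forall x : Alg B,
        Hom (CoalgCat B) (Tth w (Gfun w x)) (Gfun w (Tcom B x)),
        (forall x : Alg B, proj1_sig (Om x) = thetaR B (acar x))
        /\ ImplementsExtension w Om)
    /\ (forall (Z : Category) (N : Functor (AlgCat B) Z),
          (forall l, LeftChiCoalgebra w N l -> TthOpcoalgebra w N (lam_to_nabla w N l))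
          /\ (forall nb, TthOpcoalgebra w N nb -> LeftChiCoalgebra w N (nabla_to_lam w N nb))
          /\ (forall l, LeftChiCoalgebra w N l -> nabla_to_lam w N (lam_to_nabla w N l) = l)
          /\ (forall nb, TthOpcoalgebra w N nb -> lam_to_nabla w N (nabla_to_lam w N nb) = nb)).
Proof.
  intros H. split; [apply WD|].
  intros w. split.
  - exists (Om A B w). split; [intro x; reflexivity | apply Om_ext; exact H].
  - intros Z N. split; [|split; [|split]].
    + intros l. apply to_nabla_ok.
    + intros nb. apply to_lam_ok.
    + intros l. apply rt1.
    + intros nb. apply rt2.
Qed.
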